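(* Consider the online tolling setting described in the context, with O-D pairs and values of time drawn i.i.d. across periods $t\in[T]$ from a distribution $\mathcal{D}$ whose support has nonnegative values of time. Let $\bm{\pi}$ be the toll-update algorithm with step size $\gamma=1/\sqrt{T}$: $\boldsymbol{\tau}^{(1)}=\bm{0}$, in each period $t$ the users play an equilibrium under $\boldsymbol{\tau}^{(t)}$ with resulting edge flows $\bm{x}^t$, and $\boldsymbol{\tau}^{(t+1)}=(\boldsymbol{\tau}^{(t)}-\gamma(\bm{c}-\bm{x}^t))_+$ componentwise. Then its expected regret and expected constraint violation satisfy $$R_T(\bm{\pi})\le\frac{|E|\,(|\mathcal{U}|+\max_{e\in E}c_e)^2}{2}\sqrt{T},\qquad V_T(\bm{\pi})\le |E|\,\big(\max_{u\in\mathcal{U}}\lambda_u+\max_{e\in E}c_e+|\mathcal{U}|\big)\sqrt{T}.$$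
   Context: Network: directed graph $G=(V,E)$, edge capacities $\bm{c}=\{c_e\}_{e\in E}$ with $c_e\ge0$, fixed edge travel times $l_e\ge 0$; for a path $P$, $l_P=\sum_{e\in P}l_e$. A finite set $\mathcal{U}$ of users; user $u$ has a fixed outside-option cost $\lambda_u\ge 0$. In each period $t=1,\dots,T$ the vector $(\bm{w}^t,\bm{v}^t)=((w^t_u)_{u\in\mathcal{U}},(v^t_u)_{u\in\mathcal{U}})$ of O-D pairs and values of time is drawn i.i.d. from $\mathcal{D}$; $\mathcal{P}^t_u$ is the finite set of paths connecting $w^t_u$. Given nonnegative tolls $\boldsymbol{\tau}=\{\tau_e\}$, user $u$'s cost of path $P$ in period $t$ is $v^t_ul_P+\sum_{e\in P}\tau_e$, and an equilibrium is an assignment of each user to exactly one of a path in $\mathcal{P}^t_u$ or the outside option (binary $f^t_{P,u}$, $f^t_{o,u}$ summing to 1) that minimizes this cost among paths and the outside option (ties broken arbitrarily); edge flows are $x^t_e=\sum_{u}\sum_{P\in\mathcal{P}^t_u:e\in P}f^t_{P,u}$ (capacities need not be respected). A tolling policy chooses $\boldsymbol{\tau}^{(t)}$ as a function only of $\bm{x}^1,\dots,\bm{x}^{t-1}$. The total system cost in period $t$ is $U_t=\sum_u\big(v^t_u\sum_{P\in\mathcal{P}^t_u}l_Pf^t_{P,u}+\lambda_uf^t_{o,u}\big)$, and $U^*_t$ is the optimal value of $\min\sum_u(v^t_u\sum_{P}l_Pf_{P,u}+\lambda_uf_{o,u})$ over binary assignments with $\sum_Pf_{P,u}+f_{o,u}=1$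 for each $u$ and $\sum_u\sum_{P\ni e}f_{P,u}\le c_e$ for each $e$ (the offline optimum with full knowledge of period-$t$ data). Regret: $R_T(\bm{\pi})=\mathbb{E}[\sum_{t=1}^T(U_t-U^*_t)]$. Constraint violation: $V_T(\bm{\pi})=\mathbb{E}\big[\|(\sum_{t=1}^T(\bm{x}^t-\bm{c}))_+\|_2\big]$, with $(\cdot)_+$ the componentwise positive part. Expectations are over $\mathcal{D}$. *)

(* Defs.v *)
From mathcomp Require Import all_boot all_order all_algebra.
From mathcomp Require Import all_classical all_reals all_analysis.
Set Implicit Arguments. Unset Strict Implicit. Unset Printing Implicit Defensive.
Import Order.TTheory GRing.Theory Num.Theory.
Local Open Scope classical_set_scope.
Local Open Scope ring_scope.

Section Network.
Variables (R : realType) (V E : finType) (src dst : E -> V).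

Fixpoint walk (o d : V) (p : seq E) : bool :=
  match p with
  | [::] => o == d
  | e :: p' => (src e == o) && walk (dst e) d p'
  end.

Definition is_path (w : V * V) (p : seq E) : bool :=
  walk w.1 w.2 p && uniq (w.1 :: map dst p).

Variable (l : E -> R).

Definition path_len (p : seq E) : R := \sum_(e <- p) l e.

Variable (U : finType).

(* a u = Some p : user u takes path p ;  a u = None : outside option *)
Definition assignment := U -> option (seq E).

Definition valid (w : U -> V * V) (a : assignment) : Prop :=
  forall u, if a u is Some p then is_path (w u) p else true.

Definition flow (a : assignment) (e : E) : R :=
  \sum_(u : U) (if a u is Some p then (e \in p)%:R else 0).

Definition user_cost (lam v : U -> R) (tau : E -> R) (u : U)
  (o : option (seq E)) : R :=
  if o is Some p then v u * path_len p + \sum_(e <- p) tau e else lam u.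

Definition is_equilibrium (lam : U -> R) (w : U -> V * V) (v : U -> R)
  (tau : E -> R) (a : assignment) : Prop :=
  valid w a /\
  forall u,
    (forall p, is_path (w u) p ->
       user_cost lam v tau u (a u) <= user_cost lam v tau u (Some p)) /\
    user_cost lam v tau u (a u) <= lam u.

Definition system_cost (lam v : U -> R) (a : assignment) : R :=
  \sum_(u : U) (if a u is Some p then v u * path_len p else lam u).

Definition feasible (c : E -> R) (w : U -> V * V) (a : assignment) : Prop :=
  valid w a /\ forall e, flow a e <= c e.

Definition opt_cost (c : E -> R) (lam : U -> R) (w : U -> V * V)
  (v : U -> R) : R :=
  inf [set system_cost lam v a | a in [set a | feasible c w a]].

End Network.
Arguments flow {R E U}.

(* toll dynamics: tolls 0 = tau^(1) = 0, tolls (t+1) = (tolls t - gamma (c - x t))_+ ;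
   x t is the edge flow of (0-based) period t *)
Fixpoint tolls (R : realType) (E : Type) (gamma : R) (c : E -> R)
  (x : nat -> E -> R) (t : nat) : E -> R :=
  match t with
  | 0 => fun _ => 0
  | t'.+1 => fun e => Num.max 0 (tolls gamma c x t' e - gamma * (c e - x t' e))
  end.

Section IID.
Variables (d : measure_display) (Omega : measurableType d) (R : realType).
Variables (V U : finType).
Variables (P : probability Omega R).
Variables (w : nat -> Omega -> U -> V * V) (v : nat -> Omega -> U -> R).

Definition data_rect (t : nat) (aw : U -> V * V) (B : U -> set R) : set Omega :=
  [set om | forall u, w t om u = aw u /\ B u (v t om u)].

(* (w^t, v^t), t < T, are measurable and i.i.d.: their joint law on
   measurable rectangles (a pi-system generating the product sigma-algebra
   of (V*V)^U x R^U) factorizes, with each factor the law of period 0. *)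
Definition iid_data (T : nat) : Prop :=
  (forall t, (t < T)%N -> forall u,
      (forall a, measurable [set om | w t om u = a]) /\
      measurable_fun setT (fun om => v t om u)) /\
  forall (S : seq nat), uniq S -> all (fun t => t < T)%N S ->
  forall (aw : nat -> U -> V * V) (B : nat -> U -> set R),
    (forall t u, measurable (B t u)) ->
    P (\big[setI/setT]_(t <- S) data_rect t (aw t) (B t)) =
    (\prod_(t <- S) P (data_rect 0 (aw t) (B t)))%E.

End IID.

(* Main.v *)
Require Import Defs.
From mathcomp Require Import all_boot all_order all_algebra.
From mathcomp Require Import all_classical all_reals all_analysis.
From mathcomp Require Import measurable_realfun ring lra.
Import Order.TTheory GRing.Theory Num.Theory.
Local Open Scope classical_set_scope.
Local Open Scope ring_scope.
Lemma sumc (R : realDomainType) (E : finType) (C : R) : \sum_(e : E) C = #|E|%:R * C.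
Proof. by rewrite sumr_const mulr_natl; congr (_ *+ _); apply: eq_card. Qed.
Lemma sumo (R : realDomainType) (C : R) n : \sum_(i < n) C = n%:R * C.
Proof. rewrite sumr_const mulr_natl; congr (_ *+ _). by rewrite -[RHS](card_ord n); apply: eq_card. Qed.

Section Det.
Context (R : realType) (V E U : finType) (src dst : E -> V) (l c : E -> R) (lam : U -> R).

Lemma path_uniq w p : is_path src dst w p -> uniq p.
Proof. by case/andP => _ /= /andP [_ /map_uniq]. Qed.

Lemma sum_path (tau : E -> R) p : uniq p ->
  \sum_(e <- p) tau e = \sum_(e : E) tau e * (e \in p)%:R.
Proof.
move=> up; rewrite big_uniq //= big_mkcond /=; apply: eq_bigr => e _.
by case: (e \in p); rewrite ?mulr1 ?mulr0.
Qed.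

Lemma cost_decomp (v : U -> R) (tau : E -> R) w (a : assignment E U) :
  valid src dst w a ->
  \sum_u user_cost l lam v tau u (a u) = system_cost l lam v a + \sum_e tau e * flow a e.
Proof.
move=> va; rewrite /system_cost /flow.
under [X in _ = _ + X]eq_bigr do rewrite mulr_sumr.
rewrite [X in _ = _ + X]exchange_big /= -big_split /=; apply: eq_bigr => u _.
have := va u; rewrite /user_cost; case: (a u) => [p|] hp.
  by rewrite (sum_path _ _ (path_uniq _ _ hp)).
by rewrite big1 ?addr0 // => e _; rewrite mulr0.
Qed.

Lemma regret_step w v tau (a : assignment E U) : (forall e, 0 <= tau e) -> (forall e, 0 <= c e) ->
  is_equilibrium src dst l lam w v tau a ->
  system_cost l lam v a - opt_cost src dst l c lam w v <= \sum_e tau e * (c e - flow a e).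
Proof.
move=> t0 c0 [va heq].
suff H : system_cost l lam v a + \sum_e tau e * flow a e - \sum_e tau e * c e
    <= opt_cost src dst l c lam w v.
  have -> : \sum_e tau e * (c e - flow a e) = \sum_e tau e * c e - \sum_e tau e * flow a e.
    by rewrite -sumrB; apply: eq_bigr => e _; rewrite mulrBr.
  lra.
rewrite /opt_cost; apply: lb_le_inf.
  exists (system_cost l lam v (fun _ => None)), (fun _ => None) => //; split => // e.
  by rewrite /flow big1.
move=> _ [b [vb fb] <-].
have h1 := cost_decomp v tau _ _ va; have h2 := cost_decomp v tau _ _ vb.
have h3 : \sum_u user_cost l lam v tau u (a u) <= \sum_u user_cost l lam v tau u (b u).
  apply: ler_sum => u _; have [hp hl] := heq u; have := vb u.
  case: (b u) => [p|] hpb; [exact: hp | exact: hl].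
have h4 : \sum_e tau e * flow b e <= \sum_e tau e * c e.
  by apply: ler_sum => e _; apply: ler_wpM2l; [exact: t0 | exact: fb].
lra.
Qed.

Lemma ogd (g : R) (gr tau : nat -> R) : tau 0%N = 0 ->
  (forall t, tau t.+1 = Num.max 0 (tau t - g * gr t)) -> forall t,
  2 * g * \sum_(s < t) tau s * gr s + tau t ^+ 2 <= g ^+ 2 * \sum_(s < t) gr s ^+ 2.
Proof.
move=> h0 hS; elim=> [|t IH]; first by rewrite !big_ord0 h0 expr2 !mulr0 addr0.
rewrite !big_ord_recr /= hS.
have hm : Num.max 0 (tau t - g * gr t) ^+ 2 <= (tau t - g * gr t) ^+ 2.
  case: (lerP 0 (tau t - g * gr t)) => hy; first exact: lexx.
  by rewrite expr2 mulr0 sqr_ge0.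
nra.
Qed.


Lemma flow_bounds (a : assignment E U) e : 0 <= flow (R:=R) a e <= #|U|%:R.
Proof.
apply/andP; split.
  by apply: sumr_ge0 => u _; case: (a u) => [p|] //; exact: ler0n.
apply: (@le_trans _ _ (\sum_(u : U) (1 : R))); last by rewrite sumc mulr1.
apply: ler_sum => u _.
by case: (a u) => [p|] //; case: (e \in p).
Qed.

Lemma sum_bound (T : nat) (g M : R) (x : nat -> E -> R) : 0 < g ->
  (forall t e, (t < T)%N -> (c e - x t e) ^+ 2 <= M ^+ 2) ->
  \sum_(t < T) \sum_e tolls g c x t e * (c e - x t e) <= #|E|%:R * (g * (T%:R * M ^+ 2) / 2).
Proof.
move=> g0 hM; rewrite exchange_big /= -sumc; apply: ler_sum => e _.
have H := ogd g (fun s => c e - x s e) (fun s => tolls g c x s e) erefl (fun t => erefl) T.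
have hQ : \sum_(s < T) (c e - x s e) ^+ 2 <= T%:R * M ^+ 2.
  by rewrite -sumo; apply: ler_sum => s _; exact: hM.
have hQ2 := ler_wpM2l (sqr_ge0 g) hQ.
have ht := sqr_ge0 (tolls g c x T e).
move: H hQ2 ht.
set S := \sum_(s < T) _.
set Q := \sum_(s < T) _.
set K := T%:R * M ^+ 2.
move=> H hQ2 ht.
nra.
Qed.

Lemma tolls_ge0 (g : R) (x : nat -> E -> R) (t : nat) (e : E) : 0 <= tolls g c x t e.
Proof. by case: t => [|t] /=; [exact: lexx | rewrite le_max lexx]. Qed.

Lemma tau_lower (g : R) (x : nat -> E -> R) (e : E) (t : nat) : g * \sum_(s < t) (x s e - c e) <= tolls g c x t e.
Proof.
elim: t => [|t IH]; first by rewrite big_ord0 mulr0 /=.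
rewrite big_ord_recr /= mulrDr.
have hm : tolls g c x t e - g * (c e - x t e) <= Num.max 0 (tolls g c x t e - g * (c e - x t e)).
  by rewrite le_max lexx orbT.
move: IH hm; set S := \sum_(s < t) _; move=> IH hm.
nra.
Qed.

Lemma flow_zero w v tau (a : assignment E U) lmax e :
  (forall e, 0 <= tau e) -> (forall e, 0 <= l e) -> (forall u, 0 <= v u) ->
  (forall u, lam u <= lmax) -> lmax < tau e ->
  is_equilibrium src dst l lam w v tau a -> flow (R:=R) a e = 0.
Proof.
move=> t0 l0 v0 hlm hte [va heq]; rewrite /flow big1 // => u _.
have [_ hl] := heq u.
case hau: (a u) => [p|] //.
case ep: (e \in p) => //; exfalso.
move: hl; rewrite hau /= => hl.
have h1 : tau e <= \sum_(e' <- p) tau e'.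
  rewrite (big_rem e ep) /= ler_wpDr //; exact: sumr_ge0.
have h2 : 0 <= v u * path_len l p.
  by apply: mulr_ge0 => //; apply: sumr_ge0.
have h3 := hlm u.
move: hl h1 h2; set A := \sum_(e' <- p) _; set B := v u * _; move=> hl h1 h2.
lra.
Qed.

Lemma tau_upper (g lmax : R) (T : nat) (a : nat -> assignment E U) (w : nat -> U -> V * V)
  (v : nat -> U -> R) :
  0 <= g -> 0 <= lmax -> (forall e, 0 <= c e) -> (forall e, 0 <= l e) ->
  (forall u, lam u <= lmax) -> (forall t u, (t < T)%N -> 0 <= v t u) ->
  (forall t, (t < T)%N -> is_equilibrium src dst l lam (w t) (v t)
       (tolls g c (fun s => flow (a s)) t) (a t)) ->
  forall t, (t <= T)%N -> forall e,
    tolls g c (fun s => flow (a s)) t e <= lmax + g * #|U|%:R.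
Proof.
move=> g0 lm0 c0 l0 hlm hv heq; elim=> [|t IH] hT e.
  by rewrite /=; apply: addr_ge0 => //; apply: mulr_ge0.
have htT : (t < T)%N by [].
have IHe := IH (ltnW htT) e.
have [fb1 fb2] := andP (flow_bounds (a t) e).
have gc := mulr_ge0 g0 (c0 e).
rewrite /= ge_max; apply/andP; split.
  by apply: addr_ge0 => //; apply: mulr_ge0.
case: (lerP (tolls g c (fun s => flow (a s)) t e) lmax) => ht.
  have := ler_wpM2l g0 fb2.
  move: ht gc; set y := tolls _ _ _ _ _; set x := flow _ _; move=> ht gc hx.
  nra.
rewrite (flow_zero _ _ _ _ _ _ (fun e => tolls_ge0 _ _ _ e) l0 (fun u => hv t u htT) hlm ht (heq t htT)).
move: IHe gc; set y := tolls _ _ _ _ _; move=> IHe gc.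
lra.
Qed.

End Det.

Import HBNNSimple.
Section IntLem.
Context (R : realType) (d : measure_display) (Omega : measurableType d)
  (P : probability Omega R).
Lemma int_le_cst (f : Omega -> R) (B : R) : 0 <= B -> {ae P, forall om, f om <= B} ->
  (\int[P]_om (f om)%:E <= B%:E)%E.
Proof.
move=> B0 hae.
rewrite /integral -[B%:E]sube0.
apply: leeB; last first.
  apply: ereal_sup_ubound; exists nnsfun0; last exact: sintegral0.
  by move=> x /=; exact: funeneg_ge0.
apply/ge_ereal_sup => _ [h /= hf <-].
have -> : sintegral P h = (\int[P]_x (h x)%:E)%E.
  by rewrite integral_nnsfun// patch_setT.
apply: (@le_trans _ _ (\int[P]_x (cst B%:E) x)%E); last first.
  rewrite integral_cst//.
  apply: (@le_trans _ _ (B%:E * 1)%E); last by rewrite mule1.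
  by rewrite le_eqVlt; apply/orP; left; apply/eqP; congr (_ * _)%E; exact: probability_setT.
apply: (@ae_ge0_le_integral _ _ _ P setT measurableT (fun x => (h x)%:E)%E (cst B%:E)) => //.
- by move=> x _; rewrite lee_fin.
- by apply/measurable_EFinP; exact: measurable_funP.
- apply: filterS hae => x fxB _.
  have := hf x; rewrite patch_setT /= => /le_trans; apply.
  by rewrite funeposE /= ge_max !lee_fin fxB B0.
Qed.
End IntLem.

Theorem theorem2
  (R : realType) (d : measure_display) (Omega : measurableType d)
  (P : probability Omega R)
  (V E U : finType) (src dst : E -> V)
  (c l : E -> R) (lam : U -> R)
  (hc : forall e, 0 <= c e) (hl : forall e, 0 <= l e) (hlam : forall u, 0 <= lam u)
  (T : nat)
  (w : nat -> Omega -> U -> V * V) (v : nat -> Omega -> U -> R)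
  (hiid : iid_data P w v T)
  (hv : forall t, (t < T)%N -> forall u, {ae P, forall om, 0 <= v t om u})
  (a : nat -> Omega -> assignment E U)
  (heq : forall t, (t < T)%N -> forall om,
     is_equilibrium src dst l lam (w t om) (v t om)
       (tolls (1 / Num.sqrt T%:R) c (fun s => flow (a s om)) t) (a t om)) :
  let cmax := \big[Num.max/0]_(e : E) c e in
  let lmax := \big[Num.max/0]_(u : U) lam u in
  (\int[P]_om (\sum_(t < T)
        (system_cost l lam (v t om) (a t om)
         - opt_cost src dst l c lam (w t om) (v t om)))%:E
     <= (#|E|%:R * (#|U|%:R + cmax) ^+ 2 / 2 * Num.sqrt T%:R)%:E)%E /\
  (\int[P]_om (Num.sqrt (\sum_(e : E)
        (Num.max 0 (\sum_(t < T) (flow (a t om) e - c e))) ^+ 2))%:E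
     <= (#|E|%:R * (lmax + cmax + #|U|%:R) * Num.sqrt T%:R)%:E)%E.
Proof.
move=> cmax lmax.
have cmax0 : 0 <= cmax by exact: bigmax_ge_id.
have hcm : forall e, c e <= cmax by move=> e; exact: le_bigmax.
have lmax0 : 0 <= lmax by exact: bigmax_ge_id.
have hlm : forall u, lam u <= lmax by move=> u; exact: le_bigmax.
set g := 1 / Num.sqrt T%:R in heq.
have g0 : 0 <= g by rewrite /g divr_ge0 // sqrtr_ge0.
have hs0 := sqrtr_ge0 (T%:R : R).
have hU0 : 0 <= #|U|%:R :> R by exact: ler0n.
have hE0 : 0 <= #|E|%:R :> R by exact: ler0n.
split.
  apply: int_le_cst.
    apply: mulr_ge0 => //; apply: mulr_ge0; last by rewrite invr_ge0.
    by apply: mulr_ge0 => //; exact: sqr_ge0.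
  apply: aeW => om.
  have [T0|Tpos] := posnP T.
    by rewrite T0 big_ord0 sqrtr0 mulr0.
  pose x := fun s => flow (R:=R) (a s om).
  apply: (@le_trans _ _ (\sum_(t < T) \sum_e tolls g c x t e * (c e - x t e))).
    apply: ler_sum => t _; apply: regret_step => //.
      by move=> e; exact: tolls_ge0.
    exact: (heq t (ltn_ord t) om).
  have hs : 0 < Num.sqrt T%:R :> R by rewrite sqrtr_gt0 ltr0n.
  have gp : 0 < g by rewrite /g divr_gt0.
  have hM : forall t e, (t < T)%N -> (c e - x t e) ^+ 2 <= (#|U|%:R + cmax) ^+ 2.
    move=> t e _; have [f1 f2] := andP (flow_bounds R _ _ (a t om) e).
    have := hc e; have := hcm e; rewrite /x /=.
    move: f1 f2; set y := flow _ _ => f1 f2 h1 h2.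
    nra.
  apply: le_trans (sum_bound _ _ c T g _ x gp hM) _.
  have hT : T%:R = Num.sqrt T%:R ^+ 2 :> R by rewrite sqr_sqrtr // ler0n.
  rewrite /g; move: hs hT; set s := Num.sqrt _ => hs hT; rewrite hT le_eqVlt; apply/orP; left; apply/eqP; field; exact: lt0r_neq0.
have hae : {ae P, forall om, forall i : 'I_T * U, 0 <= v i.1 om i.2}.
  apply: (@filter_forall _ ('I_T * U)%type (fun i om => 0 <= v i.1 om i.2)) => i.
  exact: hv (ltn_ord i.1) i.2.
set A := (lmax + cmax + #|U|%:R) * Num.sqrt T%:R.
have A0 : 0 <= A by apply: mulr_ge0 => //; apply: addr_ge0 => //; exact: addr_ge0.
apply: int_le_cst; first by rewrite -mulrA; exact: mulr_ge0.
apply: filterS hae => om hvom.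
have hm : forall e, Num.max 0 (\sum_(t < T) (flow (a t om) e - c e)) <= A.
  move=> e; rewrite ge_max A0 /=.
  have [T0|Tpos] := posnP T.
    by rewrite /A T0 big_ord0 sqrtr0 mulr0.
  have hs : 0 < Num.sqrt T%:R :> R by rewrite sqrtr_gt0 ltr0n.
  have hs1 : 1 <= Num.sqrt T%:R :> R by rewrite -{1}sqrtr1; apply: ler_wsqrtr; rewrite ler1n.
  have hgs : g * Num.sqrt T%:R = 1 by rewrite /g mul1r mulVf // lt0r_neq0.
  have TL := tau_lower _ _ c g (fun s => flow (a s om)) e T.
  have := tau_upper _ _ _ _ src dst l c lam g lmax T (fun s => a s om) (fun t => w t om)
    (fun t => v t om) g0 lmax0 hc hl hlm (fun t u ht => hvom (Ordinal ht, u))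
    (fun t ht => heq t ht om) T (leqnn T) e.
  move: TL; set S := \sum_(t < T) _; set tT := tolls _ _ _ _ _ => TL TU2.
  have H1 : g * S <= lmax + g * #|U|%:R by exact: le_trans TL TU2.
  have H2 := ler_wpM2l hs0 H1.
  rewrite /A; move: H2 hgs hs hs1; set s := Num.sqrt _ => H2 hgs hs hs1.
  have H3 : S <= s * lmax + #|U|%:R.
    have H4 : s * (g * S) <= s * (lmax + g * #|U|%:R) := H2.
    by rewrite mulrDr !(mulrA s g) (mulrC s g) hgs !mul1r in H4.
  nra.
have hsum : \sum_e (Num.max 0 (\sum_(t < T) (flow (a t om) e - c e))) ^+ 2 <= (#|E|%:R * A) ^+ 2.
  apply: (@le_trans _ _ (\sum_(e : E) A ^+ 2)).
    apply: ler_sum => e _; have := hm e; have : 0 <= Num.max 0 (\sum_(t < T) (flow (a t om) e - c e)).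
      by rewrite le_max lexx.
    set m := Num.max _ _ => m0 mA; nra.
  rewrite sumc [X in _ <= X]exprMn; apply: ler_wpM2r; first exact: sqr_ge0.
  case: #|E| => [|n]; first by rewrite expr2 mulr0.
  by rewrite expr2 ler_peMl // ler1n.
rewrite -mulrA; apply: (le_trans (ler_wsqrtr hsum)).
by rewrite sqrtr_sqr ger0_norm //; exact: mulr_ge0.
Qed.
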